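(* For each $\ell\geq 3$ there are infinitely many $4$-critical graphs of odd-girth $>\ell$, forming a family of quadratic edge density; in particular $c_{\ell,4}\geq \frac{1}{(\ell+1)^2}$.
   Context: A graph is $k$-critical if it has chromatic number $k$ and removing any edge allows it to be properly $(k-1)$-colored. The odd-girth of a graph is the length of a shortest odd cycle. For integers $\ell\geq 3$, $k\geq 4$, the density constant $c_{\ell,k}$ is the supremum of the constants $c$ such that there are infinitely many $k$-critical graphs of odd-girth $>\ell$, each having more than $cn^2$ edges, where $n$ is its number of vertices. *)

(* Defs.v *)
From HB Require Import structures.
From mathcomp Require Import all_boot all_order all_algebra.
From mathcomp Require Import boolp classical_sets reals.
Set Implicit Arguments. Unset Strict Implicit. Unset Printing Implicit Defensive.
Import Order.TTheory GRing.Theory Num.Theory.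
Local Open Scope ring_scope.

Definition simple_graph (n : nat) (e : rel 'I_n) : Prop :=
  irreflexive e /\ symmetric e.

Definition num_edges (n : nat) (e : rel 'I_n) : nat :=
  #|[set p : 'I_n * 'I_n | (p.1 < p.2)%N && e p.1 p.2]|.

Definition colorable (n : nat) (e : rel 'I_n) (c : nat) : Prop :=
  exists f : 'I_n -> 'I_c, forall x y, e x y -> f x != f y.

Definition chromatic_number_eq (n : nat) (e : rel 'I_n) (k : nat) : Prop :=
  colorable e k /\ forall c, (c < k)%N -> ~ colorable e c.

Definition remove_edge (n : nat) (e : rel 'I_n) (u v : 'I_n) : rel 'I_n :=
  fun x y => e x y && ~~ (((x == u) && (y == v)) || ((x == v) && (y == u))).

Definition critical (n : nat) (e : rel 'I_n) (k : nat) : Prop :=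
  chromatic_number_eq e k /\
  forall u v, e u v -> colorable (remove_edge e u v) k.-1.

Definition has_cycle_of_length (n : nat) (e : rel 'I_n) (m : nat) : Prop :=
  (3 <= m)%N /\
  exists f : nat -> 'I_n,
    (forall i j, (i < m)%N -> (j < m)%N -> f i = f j -> i = j) /\
    (forall i, (i < m)%N -> e (f i) (f ((i.+1) %% m)%N)).

Definition odd_girth_gt (n : nat) (e : rel 'I_n) (l : nat) : Prop :=
  forall m, odd m -> (m <= l)%N -> ~ has_cycle_of_length e m.

(* "There are infinitely many k-critical graphs of odd-girth > l each having
   more than c n^2 edges": since there are only finitely many graphs (up to
   isomorphism) on a bounded number of vertices, this means that such graphs
   exist with arbitrarily many vertices. *)
Definition dense_family (R : realType) (l k : nat) (c : R) : Prop :=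
  forall N : nat, exists (n : nat) (e : rel 'I_n),
    [/\ (N <= n)%N, simple_graph e, critical e k, odd_girth_gt e l &
        c * (n%:R ^+ 2) < (num_edges e)%:R].

Definition density_constant (R : realType) (l k : nat) : R :=
  sup [set c : R | dense_family l k c].

(* Main.v *)
Require Import Defs.
From HB Require Import structures.
From mathcomp Require Import all_boot all_order all_algebra.
From mathcomp Require Import boolp classical_sets reals.
From mathcomp Require Import zify ring lra.
Import Order.TTheory GRing.Theory Num.Theory.

Local Open Scope ring_scope.

Definition succ3 (a : 'I_3) : 'I_3 := inZp (a.+1).
Definition dl (a b : 'I_3) : int := if b == succ3 a then 1 else -1.

Lemma dl_quad (a b c d : 'I_3) : a != b -> b != c -> c != d -> d != a ->
  dl a b + dl b c = dl a d + dl d c.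
Proof.
by case: a => [[|[|[|?]]] ?] //; case: b => [[|[|[|?]]] ?] //;
   case: c => [[|[|[|?]]] ?] //; case: d => [[|[|[|?]]] ?].
Qed.

Lemma dl_top (be a y b : 'I_3) : a != be -> b != be -> a != y -> y != b ->
  dl a y + dl y b = dl be b - dl be a.
Proof.
by case: be => [[|[|[|?]]] ?] //; case: a => [[|[|[|?]]] ?] //;
   case: y => [[|[|[|?]]] ?] //; case: b => [[|[|[|?]]] ?].
Qed.

Lemma dl_top0 (be a b : 'I_3) : a != be -> b != be -> a != b ->
  dl a b + dl a b = dl be a - dl be b.
Proof.
by case: be => [[|[|[|?]]] ?] //; case: a => [[|[|[|?]]] ?] //;
   case: b => [[|[|[|?]]] ?].
Qed.

Lemma dl_pm (a b : 'I_3) : dl a b = 1 \/ dl a b = -1.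
Proof. by rewrite /dl; case: ifP; [left|right]. Qed.

Lemma sum_shift (m : nat) (h : nat -> int) : (0 < m)%N -> (forall i, h (i + m)%N = h i) ->
  \sum_(0 <= i < m) h i.+1 = \sum_(0 <= i < m) h i.
Proof.
case: m => // m _ hp.
have e1 := big_nat_recl m 0 (fun i => h i) (leq0n m).
have e2 := big_nat_recr m 0 (fun i => h i) (leq0n m).
have hm : h m.+1 = h 0%N by rewrite -(hp 0%N) add0n.
move: e1 e2 => /= e1 e2.
rewrite big_nat_recr //= hm addrC.
rewrite -e1 e2; congr (_ + _).
Qed.

Lemma sum_odd (n : nat) (h : nat -> int) : (forall i, h i = 1 \/ h i = -1) ->
  exists t : int, \sum_(0 <= i < n) h i = 2 * t + n%:Z.
Proof.
move=> hh; elim: n => [|n [t IH]]; first by exists 0; rewrite big_nil.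
rewrite big_nat_recr //= IH; case: (hh n) => ->.
  by exists t; lia.
by exists (t - 1); lia.
Qed.

Lemma gadget (m r : nat) (x : nat -> nat -> 'I_3) (be : 'I_3) : odd m ->
  (forall k i, x k (i + m)%N = x k i) ->
  (forall i, x 0%N i != x 0%N i.+1) ->
  (forall k i, (k < r)%N -> x k i != x k.+1 i.+1 /\ x k.+1 i != x k i.+1) ->
  (forall i, x r i != be) -> False.
Proof.
move=> om per H0 H1 H2.
have m0 : (0 < m)%N by rewrite lt0n; apply: contraTneq om => ->.
pose W := \sum_(0 <= i < m) dl (x 0%N i) (x 0%N i.+1).
have W2 : W + W = 0.
  case: r H1 H2 => [|r'] H1 H2.
    rewrite /W -big_split /=.
    rewrite (eq_bigr (fun i => dl be (x 0%N i) - dl be (x 0%N i.+1))); last first.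
      by move=> i _; apply: dl_top0; rewrite ?H2 ?H0.
    rewrite sumrB.
    rewrite (sum_shift m (fun i => dl be (x 0%N i))) ?subrr // => i; by rewrite per.
  pose up k := \sum_(0 <= i < m) (dl (x k i) (x k.+1 i.+1) + dl (x k.+1 i.+1) (x k i.+2)).
  pose dn k := \sum_(0 <= i < m) (dl (x k.+1 i) (x k i.+1) + dl (x k i.+1) (x k.+1 i.+2)).
  have Ws : W = \sum_(0 <= i < m) dl (x 0%N i.+1) (x 0%N i.+2).
    rewrite /W -(sum_shift m (fun i => dl (x 0%N i) (x 0%N i.+1))) //.
    by move=> i /=; rewrite -addSn !per.
  have up0 : up 0%N = W + W.
    rewrite {2}Ws /up /W -big_split /=; apply: eq_bigr => i _.
    have [a1 a2] := H1 0%N i (ltn0Sn _); have [b1 b2] := H1 0%N i.+1 (ltn0Sn _).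
    apply: dl_quad; rewrite // eq_sym ?H0 //.
  have dnup : forall k, dn k = up k.
    move=> k; rewrite /dn /up !big_split /= addrC; congr (_ + _).
      apply: (sum_shift m (fun i => dl (x k i) (x k.+1 i.+1))) => // i; by rewrite -!addSn !per.
    symmetry; apply: (sum_shift m (fun i => dl (x k.+1 i) (x k i.+1))) => // i; by rewrite -!addSn !per.
  have upS : forall k, (k.+1 < r'.+1)%N -> up k.+1 = dn k.
    move=> k hk; rewrite /up /dn; apply: eq_bigr => i _.
    have [a1 a2] := H1 k.+1 i hk; have [b1 b2] := H1 k.+1 i.+1 hk.
    have [c1 c2] := H1 k i.+1 (ltnW hk); have [d1 d2] := H1 k i (ltnW hk).
    apply: dl_quad => //; by rewrite eq_sym.
  have upk : forall k, (k <= r')%N -> up k = W + W.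
    elim=> [|k IH] hk; first exact: up0.
    by rewrite upS // dnup IH // ltnW.
  rewrite -(upk r') // -dnup /dn.
  rewrite (eq_bigr (fun i => dl be (x r'.+1 i.+2) - dl be (x r'.+1 i))); last first.
    move=> i _; have [a1 a2] := H1 r' i.+1 (ltnSn _); have [b1 b2] := H1 r' i (ltnSn _).
    by apply: dl_top.
  rewrite sumrB.
  have hp : forall i, dl be (x r'.+1 (i + m)%N) = dl be (x r'.+1 i) by move=> i; rewrite per.
  rewrite (sum_shift m (fun i => dl be (x r'.+1 i.+1))) //; last by move=> i; rewrite -addSn per.
  by rewrite (sum_shift m (fun i => dl be (x r'.+1 i))) // subrr.
have [t ht] := sum_odd m (fun i => dl (x 0%N i) (x 0%N i.+1)) (fun i => dl_pm _ _).
rewrite /W ht in W2.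
move: W2 om; clear; lia.
Qed.

Local Close Scope ring_scope.

Lemma sub_colorable n (e1 e2 : rel 'I_n) c :
  (forall x y, e1 x y -> e2 x y) -> colorable e2 c -> colorable e1 c.
Proof. by move=> H [f hf]; exists f => x y /H /hf. Qed.

Lemma remove_simple n (e : rel 'I_n) u v :
  simple_graph e -> simple_graph (remove_edge e u v).
Proof.
case=> hi hs; split.
  by move=> x; rewrite /remove_edge hi.
move=> x y; rewrite /remove_edge hs.
by rewrite [(y == u) && _]andbC [(y == v) && _]andbC orbC.
Qed.

Lemma num_edges_remove n (e : rel 'I_n) u v :
  simple_graph e -> e u v -> (num_edges (remove_edge e u v) < num_edges e)%N.
Proof.
case=> hi hs euv; rewrite /num_edges; apply: proper_card; apply/properP; split.
  apply/fintype.subsetP => p; rewrite !inE => /andP[-> /andP[-> _]] //.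
have uv : u != v by apply: contraTneq euv => ->; rewrite hi.
case: (ltngtP u v) => [lt|lt|eq]; last by exfalso; move/eqP: uv; apply; apply: val_inj.
- exists (u, v); first by rewrite inE /= lt euv.
  by rewrite !inE /remove_edge !eqxx /= !andbF.
- exists (v, u); first by rewrite inE /= lt hs euv.
  by rewrite !inE /remove_edge !eqxx /= orbT !andbF.
Qed.

Lemma extract n (e : rel 'I_n) : simple_graph e -> ~ colorable e 3 ->
  exists e' : rel 'I_n, [/\ simple_graph e', (forall x y, e' x y -> e x y),
     ~ colorable e' 3 & forall u v, e' u v -> colorable (remove_edge e' u v) 3].
Proof.
move: {2}(num_edges e) (leqnn (num_edges e)) => k.
elim: k e => [|k IH] e hk hsim hnc.
  exists e; split => // u v euv.
  by have := num_edges_remove _ _ _ _ hsim euv; rewrite leqn0 in hk; rewrite (eqP hk).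
have [H|] := pselect (forall u v, e u v -> colorable (remove_edge e u v) 3).
  by exists e.
move=> /existsNP [u /existsNP [v /not_implyP [euv hn]]].
have hk' : (num_edges (remove_edge e u v) <= k)%N.
  by have h := num_edges_remove _ _ _ _ hsim euv; rewrite -ltnS (leq_trans h hk).
have [e' [s1 s2 s3 s4]] := IH _ hk' (remove_simple _ _ u v hsim) hn.
exists e'; split => // x y /s2; rewrite /remove_edge => /andP[] //.
Qed.

Lemma colorable_mono n (e : rel 'I_n) c c' : (c <= c')%N -> colorable e c -> colorable e c'.
Proof.
move=> hc [f hf]; exists (fun x => widen_ord hc (f x)) => x y /hf.
by apply: contra => /eqP[] /val_inj ->.
Qed.

Lemma crit_of n (e : rel 'I_n) : simple_graph e -> ~ colorable e 3 ->
  (forall u v, e u v -> colorable (remove_edge e u v) 3) -> critical e 4.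
Proof.
move=> [hi hs] hnc hr; split; last by [].
split; last first.
  move=> c hc hcol; apply: hnc; apply: colorable_mono hcol; by rewrite -ltnS.
have [u [v euv]] : exists u v, e u v.
  apply: contrapT => hne; apply: hnc; exists (fun _ => ord0) => x y exy.
  by exfalso; apply: hne; exists x, y.
have [g hg] := hr u v euv.
have h34 : (3 <= 4)%N by [].
exists (fun x => if x == u then (ord_max : 'I_4) else widen_ord h34 (g x)) => x y exy.
have ltg : forall z, (widen_ord h34 (g z) != ord_max).
  by move=> z; rewrite -val_eqE /= neq_ltn ltn_ord.
have uv : u != v by apply: contraTneq euv => ->; rewrite hi.
case: (eqVneq x u) => [xu|xu]; case: (eqVneq y u) => [yu|yu].
- by subst; rewrite hi in exy.
- by rewrite eq_sym ltg.
- by rewrite ltg.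
have : remove_edge e u v x y by rewrite /remove_edge exy (negPf xu) (negPf yu) /= andbF.
move=> /hg; apply: contra => /eqP[] /val_inj ->; done.
Qed.
Definition sd r m (v : nat) := v %/ m %/ r.+2.
Definition ly r m (v : nat) := v %/ m %% r.+2.
Definition ps m (v : nat) := v %% m.
Definition enc r m s k p := (s * r.+2 + k) * m + p.
Definition nv r m := (r.+2 * m) * 2.

Lemma enc_ps r m s k p : p < m -> ps m (enc r m s k p) = p.
Proof. by move=> hp; rewrite /ps /enc modnMDl modn_small. Qed.
Lemma enc_div r m s k p : p < m -> enc r m s k p %/ m = s * r.+2 + k.
Proof. move=> hp; rewrite /enc divnMDl ?divn_small ?addn0 //; by case: m hp. Qed.
Lemma enc_ly r m s k p : p < m -> k < r.+2 -> ly r m (enc r m s k p) = k.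
Proof. by move=> hp hk; rewrite /ly enc_div // modnMDl modn_small. Qed.
Lemma enc_sd r m s k p : p < m -> k < r.+2 -> sd r m (enc r m s k p) = s.
Proof. by move=> hp hk; rewrite /sd enc_div // divnMDl // divn_small ?addn0. Qed.
Lemma enc_lt r m s k p : s < 2 -> k < r.+2 -> p < m -> enc r m s k p < nv r m.
Proof. rewrite /enc /nv => hs hk hp; nia. Qed.
Lemma dec_enc r m v : 0 < m -> enc r m (sd r m v) (ly r m v) (ps m v) = v.
Proof. by move=> hm; rewrite /enc /sd /ly /ps -divn_eq -divn_eq. Qed.
Lemma sd_lt r m v : v < nv r m -> sd r m v < 2.
Proof. rewrite /sd /nv => h; rewrite divnAC -divnMA ltn_divLR; nia. Qed.
Lemma ly_lt r m v : ly r m v < r.+2.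
Proof. by rewrite /ly ltn_mod. Qed.
Lemma ps_lt m v : 0 < m -> ps m v < m.
Proof. by move=> hm; rewrite /ps ltn_mod. Qed.
Lemma enc_inj r m s k p s' k' p' : p < m -> k < r.+2 -> p' < m -> k' < r.+2 ->
  enc r m s k p = enc r m s' k' p' -> [/\ s = s', k = k' & p = p'].
Proof.
move=> hp hk hp' hk' E.
have := @enc_ps r m s k p hp; have := @enc_ly r m s k p hp hk; have := @enc_sd r m s k p hp hk.
by rewrite E enc_ps // enc_ly // enc_sd.
Qed.

Definition nb m p p' := (p' == p.+1 %% m) || (p == p'.+1 %% m).
Definition adj r m (x y : nat) : bool :=
  let s := sd r m x in let k := ly r m x in let p := ps m x in
  let s' := sd r m y in let k' := ly r m y in let p' := ps m y in
  [|| [&& s == s', k == 0, k' == 0 & nb m p p'],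
      [&& s == s', k' == k.+1, k' <= r & nb m p p'],
      [&& s == s', k == k'.+1, k <= r & nb m p p'],
      [&& s == s', k == r, k' == r.+1 & p == p'],
      [&& s == s', k' == r, k == r.+1 & p == p'] |
      [&& s != s', k == r.+1 & k' == r.+1]].
Definition G r m : rel 'I_(nv r m) := fun x y => adj r m x y.

Definition lam r m v := if sd r m v == 0 then ly r m v else (2 * r + 3) - ly r m v.

Lemma adj_lam r m (x y : nat) : x < nv r m -> y < nv r m -> adj r m x y ->
  [&& ly r m x == 0, ly r m y == 0 & sd r m x == sd r m y]
  || (lam r m y == (lam r m x).+1) || (lam r m x == (lam r m y).+1).
Proof.
move=> /sd_lt hx /sd_lt hy; have := ly_lt r m x; have := ly_lt r m y.
rewrite /adj /lam /=; move: (nb _ _ _) (ps m x == ps m y) => b1 b3.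
move: (sd r m x) (sd r m y) (ly r m x) (ly r m y) hx hy => sx sy kx ky.
case: sx => [|[|//]] _; case: sy => [|[|//]] _ /=; lia.
Qed.

Lemma adj_sd r m (x y : nat) : adj r m x y -> sd r m x != sd r m y ->
  (ly r m x == r.+1) && (ly r m y == r.+1).
Proof.
rewrite /adj /=; move: (nb _ _ _) (ps m x == ps m y) => b1 b3.
lia.
Qed.

Lemma adj_B r m (x y : nat) : adj r m x y -> sd r m x = sd r m y ->
  ly r m x = r.+1 -> ly r m y = r /\ ps m y = ps m x.
Proof.
rewrite /adj /=; move: (nb _ _ _) => b1.
move: (sd r m x) (sd r m y) (ly r m x) (ly r m y) (ps m x) (ps m y) => sx sy kx ky px py.
lia.
Qed.

Lemma adj_nb r m (x y : nat) : adj r m x y -> sd r m x = sd r m y ->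
  ly r m x != r.+1 -> ly r m y != r.+1 -> nb m (ps m x) (ps m y).
Proof.
rewrite /adj /=; move: (nb _ _ _) => b1.
move: (sd r m x) (sd r m y) (ly r m x) (ly r m y) (ps m x) (ps m y) => sx sy kx ky px py.
case: b1; lia.
Qed.

Lemma lam_step r m (x y : nat) : x < nv r m -> y < nv r m -> adj r m x y ->
  lam r m y <= lam r m x + 1 /\ lam r m x <= lam r m y + 1.
Proof.
move=> hx hy H; have := adj_lam _ _ _ _ hx hy H.
have := sd_lt _ _ _ hx; have := sd_lt _ _ _ hy.
rewrite /lam; move: (sd r m x) (sd r m y) (ly r m x) (ly r m y) => sx sy kx ky hsy hsx.
case: sx hsx => [|[|//]] _; case: sy hsy => [|[|//]] _ /=; lia.
Qed.

Lemma lam_cases r m v : v < nv r m ->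
  (sd r m v = 0 /\ lam r m v = ly r m v) \/ (sd r m v = 1 /\ lam r m v = 2 * r + 3 - ly r m v).
Proof.
move=> /sd_lt; rewrite /lam; case: (sd r m v) => [|[|//]] _ /=; [left|right]; done.
Qed.

Lemma nb_sym m p p' : nb m p p' = nb m p' p.
Proof. by rewrite /nb orbC. Qed.

Lemma adj_symI r m x y : adj r m x y -> adj r m y x.
Proof.
rewrite /adj /= nb_sym.
case/orP=> [/and4P[/eqP-> -> -> ->]|]; first by rewrite eqxx.
case/orP=> [/and4P[/eqP-> -> -> ->]|]; first by rewrite eqxx !orbT.
case/orP=> [/and4P[/eqP-> -> -> ->]|]; first by rewrite eqxx !orbT.
case/orP=> [/and4P[/eqP-> -> -> /eqP->]|]; first by rewrite !eqxx !orbT.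
case/orP=> [/and4P[/eqP-> -> -> /eqP->]|]; first by rewrite !eqxx !orbT.
by case/and3P=> h -> ->; rewrite eq_sym h !orbT.
Qed.

Lemma adj_sym r m x y : adj r m x y = adj r m y x.
Proof. by apply/idP/idP; apply: adj_symI. Qed.

Lemma par_aux (k k' u v : nat) (b : bool) : k != 0 ->
  [&& k == 0, k' == 0 & b] || (v == u.+1) || (u == v.+1) -> odd v = ~~ odd u.
Proof. lia. Qed.

Lemma modS L j : (j %% L).+1 %% L = j.+1 %% L.
Proof. by rewrite -addn1 modnDml addn1. Qed.

Lemma girth r m l : 0 < m -> l < m -> l < 2 * r + 5 -> odd_girth_gt (G r m) l.
Proof.
move=> hm hlm hlr L oL hLl [h3 [f [finj fe]]].
have L0 : 0 < L by apply: leq_trans h3.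
pose g j := f (j %% L).
have ge : forall j, adj r m (g j) (g j.+1).
  by move=> j; have := fe (j %% L) (ltn_pmod j L0); rewrite /g modS.
have gL : forall j, g (j + L) = g j by move=> j; rewrite /g modnDr.
have gm : forall j, g (j %% L) = g j by move=> j; rewrite /g modn_mod.
have gb : forall j, g j < nv r m by move=> j; exact: ltn_ord.
have oL' := odd_double_half L; rewrite oL /= in oL'.
have dist : forall a t, lam r m (g (a + t)) <= lam r m (g a) + t /\
                        lam r m (g a) <= lam r m (g (a + t)) + t.
  move=> a; elim=> [|t [IH1 IH2]]; first by rewrite !addn0.
  have := lam_step _ _ _ _ (gb (a + t)) (gb (a + t).+1) (ge (a + t)).
  rewrite (addnS a t); lia.
have flat : exists a, ly r m (g a) = 0.
  apply: contrapT => nf.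
  have par : forall j, odd (lam r m (g j.+1)) = ~~ odd (lam r m (g j)).
    move=> j; have := adj_lam _ _ _ _ (gb j) (gb j.+1) (ge j).
    have : ly r m (g j) != 0 by apply/eqP => h; apply: nf; exists j.
    exact: par_aux.
  have parj : forall j, odd (lam r m (g j)) = odd j (+) odd (lam r m (g 0)).
    elim=> [|j IH] //; rewrite par IH /=; by case: (odd j); case: (odd _).
  by have := parj L; rewrite -[g L]/(g (0 + L)) gL oL; case: (odd _).
have lamd : forall x y, x <= y -> lam r m (g y) <= lam r m (g x) + (y - x) /\
                                 lam r m (g x) <= lam r m (g y) + (y - x).
  by move=> x y hxy; have := dist x (y - x); rewrite subnKC.
have lamm : forall x, lam r m (g (x %% L)) = lam r m (g x) by move=> x; rewrite gm.
have hL2 : L = (L./2) * 2 + 1 by rewrite muln2 addn1 -[in LHS]oL'.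
case: (pselect (exists j, sd r m (g j) != sd r m (g j.+1))) => [[j hj]|nA].
  have := adj_sd _ _ _ _ (ge j) hj => /andP[/eqP l1 /eqP l2].
  have [a la] := flat.
  have far : exists b, (lam r m (g a) + (r + 2) <= lam r m (g b)) \/ (lam r m (g b) + (r + 2) <= lam r m (g a)).
    suff : ((lam r m (g a) + (r + 2) <= lam r m (g j)) \/ (lam r m (g j) + (r + 2) <= lam r m (g a))) \/
           ((lam r m (g a) + (r + 2) <= lam r m (g j.+1)) \/ (lam r m (g j.+1) + (r + 2) <= lam r m (g a))).
      by case=> h; [exists j|exists j.+1].
    have := lam_cases _ _ _ (gb j); have := lam_cases _ _ _ (gb j.+1); have := lam_cases _ _ _ (gb a).
    rewrite l1 l2 la.
    move: hj; move: (sd r m (g j)) (sd r m (g j.+1)) (sd r m (g a)) => sj sj1 sa hj.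
    move: (lam r m (g j)) (lam r m (g j.+1)) (lam r m (g a)) => xj xj1 xa.
    clear -hj; lia.
  have [b hb] := far.
  rewrite -(lamm a) -(lamm b) in hb.
  have ha' := ltn_pmod a L0; have hb' := ltn_pmod b L0.
  move: hb ha' hb'; move: (a %% L) (b %% L) => a' b' hb ha' hb'.
  have hLr : L <= 2 * r + 3 by lia.
  clear -hb ha' hb' lamd gL hLr.
  case: (leqP a' b') => hab.
    have := lamd _ _ hab; have := lamd b' (a' + L) ltac:(lia); rewrite gL; lia.
  have := lamd _ _ (ltnW hab); have := lamd a' (b' + L) ltac:(lia); rewrite gL; lia.
have sdc : forall j, sd r m (g j.+1) = sd r m (g j).
  by move=> j; apply/eqP; rewrite eq_sym; apply: contrapT => h; apply: nA; exists j; apply/negP.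
have noB : forall j, ly r m (g j) != r.+1.
  move=> j; apply/eqP => hB.
  have gJ : g (j + L) = g j by rewrite gL.
  have J1 : (j + L) = (j + L).-1.+1 by rewrite prednK // addn_gt0 L0 orbT.
  have e1 := ge (j + L).-1; rewrite -J1 adj_sym in e1.
  have e2 := ge (j + L).
  rewrite gJ in e1 e2.
  have sd1 : sd r m (g (j + L).-1) = sd r m (g j).
    by have := sdc (j + L).-1; rewrite -J1 gJ.
  have sd2 : sd r m (g (j + L).+1) = sd r m (g j) by rewrite sdc gJ.
  have [u1 u2] := adj_B _ _ _ _ e1 (esym sd1) hB.
  have [v1 v2] := adj_B _ _ _ _ e2 (esym sd2) hB.
  have E : g (j + L).-1 = g (j + L).+1.
    apply: val_inj; rewrite /= -(dec_enc r m (g (j + L).-1) hm) -(dec_enc r m (g (j + L).+1) hm).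
    by rewrite sd1 sd2 u1 v1 u2 v2.
  have := finj _ _ (ltn_pmod (j + L).-1 L0) (ltn_pmod (j + L).+1 L0) E.
  move/eqP; set K := (j + L).-1; have -> : (j + L).+1 = K + 2 by rewrite [in LHS]J1 addn2.
  by rewrite -{1}[K]addn0 eqn_modDl mod0n modn_small.
have nbj : forall j, nb m (ps m (g j)) (ps m (g j.+1)).
  by move=> j; apply: adj_nb (ge j) (esym (sdc j)) (noB _) (noB _).
have lift : forall J, exists z w t : int, [/\ (- (J%:Z) <= z <= J%:Z)%R, (z + J%:Z = 2 * w)%R &
    ((ps m (g 0))%:Z + z - (ps m (g J))%:Z = t * m%:Z)%R].
  elim=> [|J [z [w [t [k1 k2 k3]]]]].
    exists 0%R, 0%R, 0%R; split; [lia|lia|by rewrite GRing.addr0 GRing.subrr GRing.mul0r].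
  have dq := divn_eq (ps m (g J)).+1 m; have dq' := divn_eq (ps m (g J.+1)).+1 m.
  move: (nbj J); rewrite /nb => /orP[] /eqP E.
    rewrite -E in dq.
    exists (z + 1)%R, (w + 1)%R, (t + ((ps m (g J)).+1 %/ m)%:Z)%R; split; lia.
  rewrite -E in dq'.
  exists (z - 1)%R, w, (t - ((ps m (g J.+1)).+1 %/ m)%:Z)%R; split; lia.
have [z [w [t [k1 k2 k3]]]] := lift L.
rewrite -[g L]/(g (0 + L)) gL GRing.addrAC GRing.subrr GRing.add0r in k3.
clear -k1 k2 k3 hLl hlm oL.
have hLm : L < m by apply: leq_ltn_trans hLl hlm.
have : (t = 0 \/ 1 <= t \/ t <= -1)%R by lia.
case=> [h|[h|h]].
- move: k3; rewrite h GRing.mul0r => k3; lia.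
- nia.
- nia.
Qed.

Lemma vtx_lt r m s k i : 0 < m -> enc r m (s %% 2) (k %% r.+2) (i %% m) < nv r m.
Proof. by move=> hm; apply: enc_lt; rewrite ltn_pmod. Qed.

Definition vtx r m (hm : 0 < m) s k i : 'I_(nv r m) := Ordinal (vtx_lt r m s k i hm).
Arguments vtx r {m} hm s k i.

Lemma vtx_sd r m (hm : 0 < m) s k i : sd r m (vtx r hm s k i) = s %% 2.
Proof. by rewrite /= enc_sd // ltn_pmod. Qed.
Lemma vtx_ly r m (hm : 0 < m) s k i : ly r m (vtx r hm s k i) = k %% r.+2.
Proof. by rewrite /= enc_ly // ltn_pmod. Qed.
Lemma vtx_ps r m (hm : 0 < m) s k i : ps m (vtx r hm s k i) = i %% m.
Proof. by rewrite /= enc_ps // ltn_pmod. Qed.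

Lemma adjV r m (hm : 0 < m) s s' k k' i i' : adj r m (vtx r hm s k i) (vtx r hm s' k' i') =
  let s := s %% 2 in let k := k %% r.+2 in let p := i %% m in
  let s' := s' %% 2 in let k' := k' %% r.+2 in let p' := i' %% m in
  [|| [&& s == s', k == 0, k' == 0 & nb m p p'],
      [&& s == s', k' == k.+1, k' <= r & nb m p p'],
      [&& s == s', k == k'.+1, k <= r & nb m p p'],
      [&& s == s', k == r, k' == r.+1 & p == p'],
      [&& s == s', k' == r, k == r.+1 & p == p'] |
      [&& s != s', k == r.+1 & k' == r.+1]].
Proof. by rewrite /adj !vtx_sd !vtx_ly !vtx_ps. Qed.

Lemma nbS m i : nb m (i %% m) (i.+1 %% m).
Proof. by rewrite /nb modS eqxx. Qed.

Lemma third (a b c d : 'I_3) : a != b -> c != a -> c != b -> d != a -> d != b -> c = d.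
Proof.
by case: a => [[|[|[|?]]] ?] //; case: b => [[|[|[|?]]] ?] //;
   case: c => [[|[|[|?]]] ?] //; case: d => [[|[|[|?]]] ?] //= *; apply: val_inj.
Qed.

Lemma G_nc r m : odd m -> ~ colorable (G r m) 3.
Proof.
move=> om [f hf].
have hm : 0 < m by rewrite lt0n; apply: contraTneq om => ->.
pose F s k i := f (vtx r hm s k i).
have per : forall s k i, F s k (i + m) = F s k i.
  by move=> s k i; rewrite /F; congr f; apply: val_inj; rewrite /= modnDr.
have kr : forall k, k <= r.+1 -> k %% r.+2 = k by move=> k hk; rewrite modn_small.
have H0 : forall s i, s < 2 -> F s 0 i != F s 0 i.+1.
  move=> s i hs; apply: hf; rewrite /G adjV /= mod0n nbS eqxx; done.
have H1 : forall s k i, s < 2 -> k < r -> F s k i != F s k.+1 i.+1 /\ F s k.+1 i != F s k i.+1.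
  move=> s k i hs hk; split; apply: hf; rewrite /G adjV /= !kr ?nbS; lia.
have H2 : forall s i, s < 2 -> F s r i != F s r.+1 i.
  move=> s i hs; apply: hf; rewrite /G adjV /= !kr //; lia.
have H3 : forall i j, F 0 r.+1 i != F 1 r.+1 j.
  move=> i j; apply: hf; rewrite /G adjV /= !kr //; lia.
case: (pselect (forall i, F 0 r.+1 i = F 0 r.+1 0)) => [mono|].
  apply: (gadget m r (F 0) (F 0 r.+1 0) om).
  - by move=> k i; apply: per.
  - by move=> i; apply: H0.
  - by move=> k i hk; apply: H1.
  - by move=> i; rewrite -(mono i); apply: H2.
move=> /existsNP [i0 hi0].
have mono : forall j, F 1 r.+1 j = F 1 r.+1 0.
  move=> j; apply: (@third (F 0 r.+1 i0) (F 0 r.+1 0)); try by rewrite eq_sym H3.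
  by apply/eqP.
apply: (gadget m r (F 1) (F 1 r.+1 0) om).
  - by move=> k i; apply: per.
  - by move=> i; apply: H0.
- by move=> k i hk; apply: H1.
- by move=> i; rewrite -(mono i); apply: H2.
Qed.

Definition c0 q := if q == 0 then 0 else if odd q then 1 else 2.
Definition c1 q := if q == 0 then 2 else if odd q then 1 else 0.
Definition colN r m i j (x : nat) :=
  if sd r m x == 0 then
    (if ly r m x <= r then c0 ((ps m x + (m - i)) %% m) else (if ps m x == i then 1 else 0))
  else
    (if ly r m x <= r then c1 ((ps m x + (m - j)) %% m) else (if ps m x == j then 1 else 2)).

Lemma colN_lt r m i j x : colN r m i j x < 3.
Proof. by rewrite /colN /c0 /c1; repeat case: ifP. Qed.

Lemma c0_nb m q : odd m -> 3 <= m -> q < m -> c0 q != c0 (q.+1 %% m).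
Proof.
move=> om m3 hq; have : q.+1 = m \/ q.+1 < m by lia.
case=> h; [rewrite h modnn|rewrite modn_small //]; rewrite /c0 /=; repeat (case: ifP => ? /=); lia.
Qed.
Lemma c1_nb m q : odd m -> 3 <= m -> q < m -> c1 q != c1 (q.+1 %% m).
Proof.
move=> om m3 hq; have : q.+1 = m \/ q.+1 < m by lia.
case=> h; [rewrite h modnn|rewrite modn_small //]; rewrite /c1 /=; repeat (case: ifP => ? /=); lia.
Qed.

Lemma cq_ne (c : nat -> nat) m q q' : (forall q, q < m -> c q != c (q.+1 %% m)) ->
  q < m -> q' < m -> nb m q q' -> c q != c q'.
Proof.
move=> H hq hq' /orP[] /eqP ->; first exact: H.
by rewrite eq_sym; apply: H.
Qed.

Lemma nb_shift m p p' d : nb m p p' -> nb m ((p + d) %% m) ((p' + d) %% m).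
Proof.
rewrite /nb => /orP[] /eqP ->; apply/orP; [left|right];
  by rewrite modS modnDml addSn.
Qed.

Lemma shift0 m p i : p < m -> i < m -> ((p + (m - i)) %% m == 0) = (p == i).
Proof.
move=> hp hi; case: (leqP i p) => h.
  have -> : p + (m - i) = (p - i) + m by lia.
  rewrite modnDr modn_small; lia.
rewrite modn_small; lia.
Qed.

Lemma side_ne r m i j (x y : nat) : odd m -> 3 <= m ->
  sd r m x = sd r m y -> ly r m x <= r -> ly r m y <= r -> nb m (ps m x) (ps m y) ->
  colN r m i j x != colN r m i j y.
Proof.
move=> om m3 E hx hy hn; have m0 : 0 < m by lia.
rewrite /colN E hx hy; case: ifP => _.
  apply: (cq_ne c0 m) => //; first by move=> q; apply: c0_nb.
  - exact: ltn_pmod. - exact: ltn_pmod. - exact: nb_shift.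
apply: (cq_ne c1 m) => //; first by move=> q; apply: c1_nb.
- exact: ltn_pmod. - exact: ltn_pmod. - exact: nb_shift.
Qed.

Lemma match_ne r m i j (x y : nat) : i < m -> j < m -> 0 < m ->
  sd r m x = sd r m y -> ly r m x = r -> ly r m y = r.+1 -> ps m x = ps m y ->
  colN r m i j x != colN r m i j y.
Proof.
move=> hi hj m0 E hx hy hp.
have pl := ps_lt m y m0.
rewrite /colN E hx hy hp leqnn ltnn.
have := shift0 _ _ _ pl hi; have := shift0 _ _ _ pl hj.
rewrite /c0 /c1.
move: ((ps m y + (m - i)) %% m) ((ps m y + (m - j)) %% m) => a b.
by repeat (case: ifP => ? /=); lia.
Qed.

Lemma G_col r m (u v : 'I_(nv r m)) : odd m -> 3 <= m ->
  sd r m u = 0 -> ly r m u = r.+1 -> sd r m v = 1 -> ly r m v = r.+1 ->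
  colorable (remove_edge (G r m) u v) 3.
Proof.
move=> om m3 su lu sv lv; have m0 : 0 < m by lia.
set i := ps m u; set j := ps m v.
have hi : i < m by apply: ps_lt. have hj : j < m by apply: ps_lt.
exists (fun x => inord (colN r m i j x)) => x y /andP[exy hne].
suff : colN r m i j x != colN r m i j y.
  by apply: contra => /eqP/(congr1 val); rewrite /= !inordK ?colN_lt // => ->.
have hsx := sd_lt _ _ _ (ltn_ord x); have hsy := sd_lt _ _ _ (ltn_ord y).
have hkx := ly_lt r m x; have hky := ly_lt r m y.
move: exy; rewrite /G /adj /=.
case/orP=> [/and4P[/eqP E /eqP k1 /eqP k2 hn]|].
  by apply: side_ne; rewrite ?k1 ?k2.
case/orP=> [/and4P[/eqP E /eqP k1 k2 hn]|].
  by apply: side_ne; rewrite ?k1 //; lia.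
case/orP=> [/and4P[/eqP E /eqP k1 k2 hn]|].
  by apply: side_ne; rewrite ?k1 //; lia.
case/orP=> [/and4P[/eqP E /eqP k1 /eqP k2 /eqP hp]|].
  exact: match_ne.
case/orP=> [/and4P[/eqP E /eqP k1 /eqP k2 /eqP hp]|].
  by rewrite eq_sym; apply: match_ne.
case/and3P=> hs /eqP k1 /eqP k2.
have ex : forall w : 'I_(nv r m), sd r m w = sd r m u -> ly r m w = ly r m u -> ps m w = ps m u -> w = u.
  move=> w h1 h2 h3; apply: val_inj.
  by rewrite /= -(dec_enc r m w m0) -(dec_enc r m u m0) h1 h2 h3.
have ey : forall w : 'I_(nv r m), sd r m w = sd r m v -> ly r m w = ly r m v -> ps m w = ps m v -> w = v.
  move=> w h1 h2 h3; apply: val_inj.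
  by rewrite /= -(dec_enc r m w m0) -(dec_enc r m v m0) h1 h2 h3.
move: hne; rewrite /colN k1 k2 ltnn.
have : (sd r m x = 0 /\ sd r m y = 1) \/ (sd r m x = 1 /\ sd r m y = 0) by lia.
case=> -[s1 s2]; rewrite s1 s2 /=.
  case: (eqVneq (ps m x) i) => px; case: (eqVneq (ps m y) j) => py //.
  by rewrite (ex x) ?su ?lu // (ey y) ?sv ?lv // !eqxx.
case: (eqVneq (ps m x) j) => px; case: (eqVneq (ps m y) i) => py //.
by rewrite (ex y) ?su ?lu // (ey x) ?sv ?lv // !eqxx /= orbT.
Qed.

Lemma nb_irr m p : 2 <= m -> p < m -> nb m p p = false.
Proof.
move=> m2 hp; rewrite /nb orbb; apply/negbTE.
have : p.+1 = m \/ p.+1 < m by lia.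
case=> h; [rewrite h modnn|rewrite modn_small //]; lia.
Qed.

Lemma G_simple r m : 2 <= m -> simple_graph (G r m).
Proof.
move=> m2; split; last by move=> x y; rewrite /G adj_sym.
move=> x; rewrite /G /adj /= nb_irr //; last by apply: ps_lt; lia.
move: (sd r m x) (ly r m x) => s k; lia.
Qed.

Lemma vtx_inj r m (hm : 0 < m) s k (i j : 'I_m) : s < 2 -> k < r.+2 ->
  vtx r hm s k i = vtx r hm s k j -> i = j.
Proof.
move=> hs hk E; apply: val_inj; have := congr1 (ps m \o val) E.
by rewrite /= !enc_ps ?ltn_pmod // !modn_small.
Qed.

Lemma count_edges r m (e : rel 'I_(nv r m)) : odd m -> 3 <= m ->
  simple_graph e -> (forall x y, e x y -> G r m x y) -> ~ colorable e 3 ->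
  m * m < num_edges e.
Proof.
move=> om m3 [hi hs] sub nc; have m0 : 0 < m by lia.
pose phi (p : 'I_m * 'I_m) := (vtx r m0 0 r.+1 p.1, vtx r m0 1 r.+1 p.2).
have phi_inj : injective phi.
  move=> [a b] [c d] [E1 E2]; move: (congr1 (ps m) E1) (congr1 (ps m) E2).
  rewrite !enc_ps ?ltn_pmod // !modn_small // => e1 e2.
  by congr pair; apply: val_inj.
set P := [set p : 'I_(nv r m) * 'I_(nv r m) | (p.1 < p.2)%N && e p.1 p.2].
have allBC : forall p, e (phi p).1 (phi p).2.
  move=> p; apply: contrapT => hn; apply: nc.
  apply: (sub_colorable _ _ (remove_edge (G r m) (phi p).1 (phi p).2)).
    move=> x y exy; rewrite /remove_edge (sub _ _ exy) /=.
    apply/negP => /orP[] /andP[/eqP ex /eqP ey]; subst.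
      by apply: hn.
    by apply: hn; rewrite hs.
  by apply: G_col; rewrite ?vtx_sd ?vtx_ly ?modn_small.
have IP : phi @: [set: 'I_m * 'I_m] \subset P.
  apply/fintype.subsetP => q /imsetP [p _ ->]; rewrite inE allBC andbT /=.
  case: p => a b /=.
  rewrite /enc !modn_small //; have := ltn_ord a; have : m <= r.+2 * m by rewrite mulSn leq_addr.
  rewrite mul0n mul1n add0n mulnDl; lia.
have cI : #|phi @: [set: 'I_m * 'I_m]| = m * m.
  by rewrite card_imset // cardsT card_prod card_ord.
rewrite -cI /num_edges; apply: proper_card; rewrite properEcard IP /= -/P.
rewrite ltn_neqAle subset_leq_card // andbT; apply/negP => /eqP ecard.
have EQ : phi @: [set: 'I_m * 'I_m] = P by apply/eqP; rewrite eqEcard IP ecard leqnn.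
apply: nc; exists (fun x => inord (sd r m x)) => x y exy.
have side : forall a b : 'I_(nv r m), (a < b)%N -> e a b -> sd r m a = 0 /\ sd r m b = 1.
  move=> a b ab eab; have : (a, b) \in P by rewrite inE ab eab.
  rewrite -EQ => /imsetP [p _ [-> ->]]; by rewrite !vtx_sd.
have xy : x != y by apply: contraTneq exy => ->; rewrite hi.
have : (x < y)%N \/ (y < x)%N by move: xy; rewrite -val_eqE /=; lia.
case=> h.
  have [-> ->] := side _ _ h exy.
  by rewrite -val_eqE /= !inordK.
rewrite hs in exy; have [-> ->] := side _ _ h exy.
by rewrite -val_eqE /= !inordK.
Qed.

Lemma main_family l (hl : 3 <= l) N : exists n (e : rel 'I_n),
  [/\ N <= n, simple_graph e, critical e 4, odd_girth_gt e l &
      n * n < l.+1 ^ 2 * num_edges e].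
Proof.
set r := (l - 3)./2; set m := (N + l).*2.+1.
have om : odd m by rewrite /m /= odd_double.
have m3 : 3 <= m by rewrite /m; lia.
have [e' [s1 s2 s3 s4]] := extract _ _ (G_simple r m ltac:(lia)) (G_nc r m om).
have hnv : nv r m <= l.+1 * m.
  rewrite /nv mulnAC; apply: leq_mul => //.
  have := odd_double_half (l - 3); rewrite /r; lia.
exists (nv r m), e'; split => //.
- rewrite /nv; apply: leq_trans (_ : m <= _); first by rewrite /m; lia.
  lia.
- exact: crit_of.
- move=> L oL hL [h3 [f [fi fe]]].
  apply: (girth r m l ltac:(lia) ltac:(rewrite /m; lia) _ L oL hL).
    have := odd_double_half (l - 3); rewrite /r; lia.
  by split => //; exists f; split => // i hi; apply: s2; apply: fe.
- have ce := count_edges r m e' om m3 s1 s2 s3.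
  apply: (leq_ltn_trans (leq_mul hnv hnv)).
  have -> : l.+1 * m * (l.+1 * m) = l.+1 ^ 2 * (m * m) by rewrite expnS expn1; lia.
  by rewrite ltn_pmul2l ?expn_gt0.
Qed.
Local Open Scope ring_scope.

Lemma num_edges_le n (e : rel 'I_n) : (num_edges e <= n * n)%N.
Proof.
rewrite /num_edges; apply: leq_trans (max_card _) _.
by rewrite card_prod card_ord.
Qed.

Theorem theorem3 (R : realType) (l : nat) (hl : (3 <= l)%N) :
  (forall N : nat, exists (n : nat) (e : rel 'I_n),
     [/\ (N <= n)%N, simple_graph e, critical e 4 & odd_girth_gt e l]) /\
  (exists c : R, 0 < c /\ dense_family l 4 c) /\
  1 / (l.+1%:R ^+ 2) <= density_constant R l 4.
Proof.
set c : R := 1 / (l.+1%:R ^+ 2).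
have c0 : 0 < c by rewrite /c divr_gt0 // exprn_gt0 // ltr0n.
have dc : dense_family l 4 c.
  move=> N; have [n [e [h1 h2 h3 h4 h5]]] := main_family l hl N.
  exists n, e; split => //.
  have L2 : 0 < (l.+1%:R : R) ^+ 2 by rewrite exprn_gt0 // ltr0n.
  rewrite /c mul1r mulrC ltr_pdivrMr //.
  have := h5; rewrite -(ltr_nat R) natrM natrM natrX => h.
  by rewrite expr2 [X in _ < X]mulrC.
split.
  by move=> N; have [n [e [h1 h2 h3 h4 h5]]] := main_family l hl N; exists n, e.
split; first by exists c.
rewrite /density_constant; apply: sup_upper_bound => //.
split; first by exists c.
exists 1 => y dy.
have [n [e [h1 h2 h3 h4 h5]]] := dy 1%N.
have hn : (0 < n%:R :> R) by rewrite ltr0n.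
have he := num_edges_le n e; rewrite -(ler_nat R) natrM in he.
have := lt_le_trans h5 he; rewrite expr2 => h.
nra.
Qed.
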